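(* Let $N$ be a nested set of separations of a connected locally finite graph $G$, let $((A_i,B_i))_{i\in\mathbb N}$ be a strictly increasing sequence of orientations of separations in $N$ whose underlying separations are tight, and let $(A,B)=(\bigcup_iA_i,\bigcap_iB_i)$. If the sequence is non-exhaustive (i.e. $B\ne\emptyset$) and $N$ distinguishes all pre-tangles in $G$ induced by ends of $G$ lying in the closure of $A\cap B$, then exactly one end of $G$ lies in the closure of $A\cap B$.
   Context: A separation of $G$ is an unordered pair $\{A,B\}$ of subsets of $V(G)$ with $A\cup B=V(G)$ and no edge between $A\setminus B$ and $B\setminus A$; order $|A\cap B|$. Oriented separations are ordered by $(A,B)\le(C,D)$ iff $A\subseteq C$ and $B\supseteq D$; nested means some orientations are comparable. For $X\subseteq V(G)$, a component $K$ of $G-X$ is tight if $N_G(K)=X$; a separation $\{A,B\}$ is tight if both $A\setminus B$ and $B\setminus A$ contain the vertex set of a tight component of $G-(A\cap B)$. A pre-tangle is a consistent set $P$ of oriented separations (no $(A,B),(C,D)\in P$ with $\{A,B\}\ne\{C,D\}$ and $(B,A)\le(C,D)$) containing, for some $k\in\mathbb N\cup\{\aleph_0\}$, exactly one orientation of every separation of order $<k$ and nothing else. A separation distinguishes two pre-tangles if both orient it, differently; $N$ distinguishes a set of pre-tangles if any two of them distinguished by some separation are distinguished by an element of $N$. An end is an equivalence class of rays; the pre-tangle $P_\omega$ induced by an end $\omega$ contains, for every finite-order separation $\{A,B\}$, the orientation $(A,B)$ such that rays of $\omega$ have cofinitely many vertices in $B\setminus A$. A comb is a ray (spine) together with infinitely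 many disjoint finite paths meeting it exactly in their first vertex; their last vertices are the teeth. An end $\omega$ lies in the closure of $U\subseteq V(G)$ if there is a comb with teeth in $U$ whose spine is in $\omega$. *)

(* Defs.v *)
From Stdlib Require Import List Arith.
Import ListNotations.

Section Graphs.
Variable V : Type.
Variable adj : V -> V -> Prop.

Definition seteq (X Y : V -> Prop) : Prop := forall v, X v <-> Y v.

Definition finite_set (X : V -> Prop) : Prop :=
  exists l : list V, forall v, X v -> In v l.

Definition locally_finite : Prop :=
  forall v, finite_set (adj v).

Inductive walk_in (S : V -> Prop) : V -> V -> Prop :=
| walk_refl : forall v, S v -> walk_in S v v
| walk_step : forall u w v, S u -> adj u w -> walk_in S w v -> walk_in S u v.

Definition connected_graph : Prop :=
  forall u v, walk_in (fun _ => True) u v.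

Fixpoint adj_chain (p : list V) : Prop :=
  match p with
  | x :: ((y :: _) as t) => adj x y /\ adj_chain t
  | _ => True
  end.

Definition is_path (p : list V) : Prop :=
  p <> [] /\ NoDup p /\ adj_chain p.

Definition is_ray (r : nat -> V) : Prop :=
  (forall n m, r n = r m -> n = m) /\ (forall n, adj (r n) (r (S n))).

(** Two rays are equivalent (lie in the same end) if for every finite
    vertex set X they have tails in the same component of G - X. *)
Definition ray_equiv (r1 r2 : nat -> V) : Prop :=
  forall X : V -> Prop, finite_set X ->
    exists n0 m0,
      (forall n, n0 <= n -> ~ X (r1 n)) /\
      (forall m, m0 <= m -> ~ X (r2 m)) /\
      walk_in (fun v => ~ X v) (r1 n0) (r2 m0).

(** The ray s is the spine of a comb whose teeth lie in U. *)
Definition comb_with_teeth_in (s : nat -> V) (U : V -> Prop) : Prop :=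
  exists P : nat -> list V,
    (forall i, is_path (P i)) /\
    (forall i j x, i <> j -> In x (P i) -> ~ In x (P j)) /\
    (forall i, exists k rest, P i = s k :: rest /\
                 forall y, In y rest -> forall m, y <> s m) /\
    (forall i, U (last (P i) (s 0))).

Definition end_in_closure (r : nat -> V) (U : V -> Prop) : Prop :=
  exists s, is_ray s /\ ray_equiv s r /\ comb_with_teeth_in s U.

Definition is_sep (A B : V -> Prop) : Prop :=
  (forall v, A v \/ B v) /\
  (forall u v, A u -> ~ B u -> B v -> ~ A v -> ~ adj u v).

Definition finite_order (A B : V -> Prop) : Prop :=
  finite_set (fun v => A v /\ B v).

Definition sep_le (A B C D : V -> Prop) : Prop :=
  (forall v, A v -> C v) /\ (forall v, D v -> B v).

Definition sep_lt (A B C D : V -> Prop) : Prop :=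
  sep_le A B C D /\ ~ (seteq A C /\ seteq B D).

Definition same_sep (A B C D : V -> Prop) : Prop :=
  (seteq A C /\ seteq B D) \/ (seteq A D /\ seteq B C).

(** A set N of (unordered) separations is given by a predicate on
    ordered pairs; {A,B} is in N if some orientation of it is listed. *)
Definition in_sepset (N : (V -> Prop) -> (V -> Prop) -> Prop)
  (A B : V -> Prop) : Prop :=
  exists C D, N C D /\ same_sep A B C D.

Definition nested (N : (V -> Prop) -> (V -> Prop) -> Prop) : Prop :=
  forall A B C D, N A B -> N C D ->
    sep_le A B C D \/ sep_le A B D C \/ sep_le B A C D \/ sep_le B A D C.

Definition component (X K : V -> Prop) : Prop :=
  (exists v, K v) /\
  (forall v, K v -> ~ X v) /\
  (forall u v, K u -> K v -> walk_in K u v) /\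
  (forall u v, K u -> adj u v -> ~ X v -> K v).

Definition nbhd (K : V -> Prop) (v : V) : Prop :=
  ~ K v /\ exists u, K u /\ adj u v.

Definition tight_component (X K : V -> Prop) : Prop :=
  component X K /\ seteq (nbhd K) X.

Definition tight_sep (A B : V -> Prop) : Prop :=
  is_sep A B /\
  (exists K, tight_component (fun v => A v /\ B v) K /\
             forall v, K v -> A v /\ ~ B v) /\
  (exists K, tight_component (fun v => A v /\ B v) K /\
             forall v, K v -> B v /\ ~ A v).

(** (C,D) belongs to the pre-tangle P_omega induced by the end of r. *)
Definition end_orients (r : nat -> V) (C D : V -> Prop) : Prop :=
  is_sep C D /\ finite_order C D /\
  exists n0, forall n, n0 <= n -> D (r n) /\ ~ C (r n).

Definition distinguishes_ends (r1 r2 : nat -> V) (C D : V -> Prop) : Prop :=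
  end_orients r1 C D /\ end_orients r2 D C.

End Graphs.

(* Main.v *)
Require Import Defs.
From Stdlib Require Import List Arith Lia Classical ClassicalEpsilon.
Import ListNotations.

Lemma walk_mono V adj (S S' : V -> Prop) u v : (forall x, S x -> S' x) -> walk_in V adj S u v -> walk_in V adj S' u v.
Proof. intros H W; induction W; [apply walk_refl|eapply walk_step]; eauto. Qed.

Lemma walk_start V adj (S : V -> Prop) u v : walk_in V adj S u v -> S u.
Proof. intros W; destruct W; auto. Qed.

Lemma walk_end V adj (S : V -> Prop) u v : walk_in V adj S u v -> S v.
Proof. intros W; induction W; auto. Qed.

Lemma walk_trans V adj (S : V -> Prop) u v w : walk_in V adj S u v -> walk_in V adj S v w -> walk_in V adj S u w.
Proof. intros W; revert w; induction W; intros; auto. eapply walk_step; eauto. Qed.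

Lemma walk_rev V adj (adj_sym : forall u v, adj u v -> adj v u) (S : V -> Prop) u v :
  walk_in V adj S u v -> walk_in V adj S v u.
Proof.
  intros W; induction W. apply walk_refl; auto.
  eapply walk_trans; [exact IHW|]. eapply walk_step; eauto. eapply walk_start; eauto.
  apply walk_refl; auto.
Qed.

Lemma ray_walk V adj (r : nat -> V) (Q : V -> Prop) N : is_ray V adj r ->
  (forall n, N <= n -> Q (r n)) -> forall n, N <= n -> walk_in V adj Q (r N) (r n).
Proof.
  intros [_ Ha] HS n Hn. induction n.
  - assert (N = 0) by lia; subst. apply walk_refl; auto.
  - destruct (Nat.eq_dec N (S n)) as [->|Hne]. apply walk_refl; auto.
    eapply walk_trans; [apply IHn; lia|]. eapply walk_step; [apply HS; lia|apply Ha|apply walk_refl; apply HS; lia].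
Qed.

Lemma walk_cross V adj (S : V -> Prop) a b : walk_in V adj S a b -> exists l, In a l /\ (forall x, In x l -> S x) /\
  forall A B, is_sep V adj A B -> A a -> ~ B a -> B b -> exists x, In x l /\ A x /\ B x.
Proof.
  intros W; induction W as [v Sv|u w v Su Ha W [l [Hw [HlS Hl]]]].
  - exists [v]; split; [left; auto|split]. intros x [->|[]]; auto. intros A B _ _ Hn Hb; tauto.
  - exists (u :: l); split; [left; auto|split]. intros x [->|Hx]; auto.
    intros A B Hs HA HnB Hb.
    destruct (classic (B w)) as [Bw|nBw].
    + destruct (classic (A w)) as [Aw|nAw].
      * exists w; split; [right; auto|auto].
      * exfalso. destruct Hs as [_ He]. eapply He; eauto.
    + assert (A w) by (destruct Hs as [Hc _]; destruct (Hc w); tauto).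
      destruct (Hl A B Hs H nBw Hb) as [x [? ?]]. exists x; split; [right|]; auto.
Qed.

Lemma walk_side V adj (A B S : V -> Prop) a b : is_sep V adj A B -> (forall v, S v -> ~ (A v /\ B v)) ->
  walk_in V adj S a b -> A a -> ~ B a -> A b /\ ~ B b.
Proof.
  intros [Hc He] HS W; induction W; intros HA HB; auto.
  apply IHW; clear IHW.
  - destruct (Hc w); auto. destruct (classic (A w)); auto. exfalso. eapply He; eauto.
  - intro Bw. destruct (classic (A w)). apply (HS w); [eapply walk_start; eauto|tauto]. eapply He; eauto.
Qed.

Lemma inf_pigeon {T} (P : nat -> T -> Prop) (l : list T) :
  (forall N, exists i, N <= i /\ exists x, In x l /\ P i x) ->
  exists x, In x l /\ forall N, exists i, N <= i /\ P i x.
Proof.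
  induction l as [|a l IH]; intros H.
  - destruct (H 0) as [i [_ [x [[] _]]]].
  - destruct (classic (forall N, exists i, N <= i /\ P i a)) as [Ha|Ha].
    + exists a; split; [left|]; auto.
    + apply not_all_ex_not in Ha as [N0 HN0].
      destruct IH as [x [Hx Hi]].
      * intros N. destruct (H (max N N0)) as [i [Hi [x [[<-|Hx] Px]]]].
        -- exfalso; apply HN0; exists i; split; [lia|auto].
        -- exists i; split; [lia|]. eauto.
      * exists x; split; [right|]; auto.
Qed.

Lemma inj_avoid {T} (r : nat -> T) : (forall n m, r n = r m -> n = m) -> forall l, exists N, forall n, N <= n -> ~ In (r n) l.
Proof.
  intros Hi l; induction l as [|a l [N1 HN1]].
  - exists 0; intros n _ [].
  - destruct (classic (exists k, r k = a)) as [[k Hk]|Hk].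
    + exists (max N1 (S k)); intros n Hn [Ha|Ha].
      * rewrite <- Hk in Ha. apply Hi in Ha. lia.
      * apply (HN1 n); [lia|auto].
    + exists N1; intros n Hn [Ha|Ha]; [apply Hk; eauto|apply (HN1 n); auto].
Qed.

Lemma list_bound {T} (P : T -> nat -> Prop) (l : list T) : (forall x, In x l -> exists n, P x n) ->
  exists N, forall x, In x l -> exists n, n <= N /\ P x n.
Proof.
  induction l as [|a l IH]; intros H.
  - exists 0; intros x [].
  - destruct (H a (or_introl eq_refl)) as [na Ha].
    destruct IH as [N HN]. intros; apply H; right; auto.
    exists (max na N). intros x [<-|Hx]. exists na; split; [lia|auto].
    destruct (HN x Hx) as [n [? ?]]; exists n; split; [lia|auto].
Qed.

Lemma finite_union {T} V (l : list T) (Q : T -> V -> Prop) : (forall x, In x l -> finite_set V (Q x)) ->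
  finite_set V (fun v => exists x, In x l /\ Q x v).
Proof.
  induction l as [|a l IH]; intros H.
  - exists []; intros v [x [[] _]].
  - destruct (H a (or_introl eq_refl)) as [la Ha]. destruct IH as [lb Hb]. intros; apply H; right; auto.
    exists (la ++ lb). intros v [x [[<-|Hx] Hq]]; apply in_or_app; [left; auto|right; apply Hb; eauto].
Qed.

Lemma least (P : nat -> Prop) : (exists n, P n) -> exists n, P n /\ forall m, P m -> n <= m.
Proof.
  intros [n Hn]. apply NNPP; intro Hc.
  assert (forall k m, m <= k -> ~ P m).
  { induction k; intros m Hm Pm.
    - apply Hc; exists m; split; auto; intros; lia.
    - apply Hc; exists m; split; auto. intros m' Pm'. destruct (le_lt_dec m m'); auto.
      exfalso; apply (IHk m'); [lia|auto]. }
  apply (H n n); auto.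
Qed.

Lemma sep_sym V adj (adj_sym : forall u v, adj u v -> adj v u) A B : is_sep V adj A B -> is_sep V adj B A.
Proof.
  intros [Hc He]; split. intros v; destruct (Hc v); auto.
  intros u v Bu nAu Av nBv Huv. apply (He v u Av nBv Bu nAu). auto.
Qed.

Lemma walk_exit V adj (S P : V -> Prop) a b : walk_in V adj S a b -> ~ P a -> P b ->
  exists l f, walk_in V adj (fun v => ~ P v) a l /\ P f /\ adj l f.
Proof.
  intros W; induction W as [v|u w v Su Ha W IH]; intros Pa Pb. tauto.
  destruct (classic (P w)) as [Pw|Pw].
  - exists u, w; repeat split; auto. apply walk_refl; auto.
  - destruct (IH Pw Pb) as [l [f [? ?]]]. exists l, f; split; auto. eapply walk_step; eauto.
Qed.

Lemma U_infinite V adj (adj_sym : forall u v, adj u v -> adj v u)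
  (Gconn : connected_graph V adj) (Glf : locally_finite V adj)
  (As Bs : nat -> V -> Prop)
  (mono : forall i j, i <= j -> (forall v, As i v -> As j v) /\ (forall v, Bs j v -> Bs i v))
  (strict : forall i j, i < j -> ~ (seteq V (As i) (As j) /\ seteq V (Bs i) (Bs j)))
  (seps : forall i, is_sep V adj (As i) (Bs i))
  (tight : forall i, tight_sep V adj (As i) (Bs i))
  (nonexh : exists v, forall i, Bs i v) :
  ~ finite_set V (fun v => (exists i, As i v) /\ (forall i, Bs i v)).
Proof.
  set (U := fun v => (exists i, As i v) /\ (forall i, Bs i v)).
  assert (infU : forall x, (forall N, exists i, N <= i /\ (As i x /\ Bs i x)) -> U x).
  { intros x H. split. destruct (H 0) as [i [_ [? _]]]; eauto.
    intros k. destruct (H k) as [i [Hi [_ Hb]]]. apply (proj2 (mono k i Hi)); auto. }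
  intros [F HF].
  assert (Hw : exists w, U w).
  { destruct (tight 0) as [_ [[K [[[[a Ka] _] _] HK]] _]].
    destruct nonexh as [v Hv].
    destruct (walk_cross V adj _ _ _ (Gconn a v)) as [l [_ [_ Hl]]].
    destruct (inf_pigeon (fun i x => As i x /\ Bs i x) l) as [x [_ Hx]].
    - intros N. exists N; split; auto. apply Hl; auto.
      + apply (proj1 (mono 0 N ltac:(lia))), HK; auto.
      + intro HB. apply (HK a Ka). apply (proj2 (mono 0 N ltac:(lia))); auto.
    - exists x; apply infU; auto. }
  destruct Hw as [w Uw].
  destruct (list_bound (fun x n => U x -> As n x) F) as [i0 Hi0].
  { intros x _. destruct (classic (U x)) as [Ux|Ux].
    - destruct Ux as [[n Hn] ?]. exists n; auto.
    - exists 0; tauto. }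
  assert (UX : forall i x, i0 <= i -> U x -> As i x /\ Bs i x).
  { intros i x Hi Ux. split; [|apply Ux]. destruct (Hi0 x (HF x Ux)) as [n [Hn Hx]].
    apply (proj1 (mono n i ltac:(lia))); auto. }
  set (Q := fun i y => exists K, tight_component V adj (fun v => As i v /\ Bs i v) K /\
                                (forall v, K v -> Bs i v /\ ~ As i v) /\ K y).
  destruct (Glf w) as [lw Hlw].
  destruct (inf_pigeon Q lw) as [y [_ Hy]].
  { intros N. exists (max N i0); split; [lia|].
    destruct (tight (max N i0)) as [_ [_ [K [HKt HK]]]].
    destruct (proj2 (proj2 HKt w) (UX (max N i0) w (Nat.le_max_r _ _) Uw)) as [_ [u [Ku Hu]]].
    exists u; split; [apply Hlw; apply adj_sym; auto|]. exists K; split; [exact HKt|split; auto]. }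
  assert (ynA : forall j, ~ As j y).
  { intros j Hj. destruct (Hy j) as [i [Hi [K [_ [HK Ky]]]]].
    apply (HK y Ky). apply (proj1 (mono j i Hi)); auto. }
  assert (yB : forall k, Bs k y).
  { intros k. destruct (Hy k) as [i [Hi [K [_ [HK Ky]]]]].
    apply (proj2 (mono k i Hi)), HK; auto. }
  destruct (classic (exists i, i0 <= i /\ Q i y /\ exists x, As i x /\ Bs i x /\ ~ U x))
    as [[i [Hi [[K [[HKc HKn] [HKs Ky]]] [x [Ax [Bx nUx]]]]]]|Hno].
  - destruct (proj2 (HKn x) (conj Ax Bx)) as [_ [u [Ku Hux]]].
    assert (W : walk_in V adj (fun v => K v \/ v = x) y x).
    { eapply walk_trans.
      - eapply walk_mono; [|apply (proj1 (proj2 (proj2 HKc))); eauto]. auto.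
      - eapply walk_step; [left; auto|eauto|apply walk_refl; auto]. }
    assert (Hk0 : exists k0, ~ Bs k0 x).
    { apply NNPP; intro H. apply nUx. split; eauto. intros k; apply NNPP; intro; apply H; eauto. }
    destruct Hk0 as [k0 Hk0].
    destruct (walk_cross V adj _ _ _ W) as [l [_ [HlS Hl]]].
    destruct (inf_pigeon (fun k z => As k z /\ Bs k z) l) as [z [Hz Hzi]].
    { intros N. exists (max N (max i k0)); split; [lia|].
      set (k := max N (max i k0)).
      destruct (Hl (Bs k) (As k)) as [z [? [? ?]]].
      - apply sep_sym; auto.
      - auto.
      - auto.
      - apply (proj1 (mono i k ltac:(lia))); auto.
      - exists z; auto. }
    assert (Uz : U z) by (apply infU; auto).
    destruct (HlS z Hz) as [Kz| ->]; [|tauto].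
    apply (proj1 (proj2 HKc) z Kz). apply UX; auto.
  - assert (Hsub : forall i, i0 <= i -> Q i y -> forall x, As i x -> Bs i x -> U x).
    { intros i Hi Qi x Ax Bx. apply NNPP; intro. apply Hno. exists i; repeat split; eauto. }
    destruct (finite_union V F adj) as [L HL].
    { intros f _. apply Glf. }
    destruct (list_bound (fun l n => (exists i, As i l) -> As n l) L) as [j0 Hj0].
    { intros l _. destruct (classic (exists i, As i l)) as [[n Hn]|Hn]. exists n; auto. exists 0; tauto. }
    destruct (Hy (max i0 j0)) as [i [Hi Qi]].
    destruct (Hy (S i)) as [j [Hj Qj]].
    assert (Hz : exists z, (As j z /\ ~ Bs j z) /\ (Bs i z /\ ~ As i z)).
    { destruct (classic (exists v, As j v /\ ~ As i v)) as [[v [Ajv Aiv]]|H1].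
      - exists v. assert (Bs i v) by (destruct (seps i) as [Hc _]; destruct (Hc v); tauto).
        repeat split; auto. intro Bjv. apply Aiv. apply UX; [lia|]. apply (Hsub j); auto; lia.
      - destruct (classic (exists v, Bs i v /\ ~ Bs j v)) as [[v [Biv Bjv]]|H2].
        + exists v. assert (As j v) by (destruct (seps j) as [Hc _]; destruct (Hc v); tauto).
          repeat split; auto. intro Aiv. apply Bjv. apply UX; [lia|]. apply (Hsub i); auto; lia.
        + exfalso. apply (strict i j ltac:(lia)). split; intros v; split; intros H.
          * apply (proj1 (mono i j ltac:(lia))); auto.
          * apply NNPP; intro; apply H1; eauto.
          * apply NNPP; intro; apply H2; eauto.
          * apply (proj2 (mono i j ltac:(lia))); auto. }
    destruct Hz as [z [[Ajz Bjz] [Biz Aiz]]].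
    assert (nUz : ~ U z) by (intro Uz; apply Aiz; apply UX; auto; lia).
    destruct (walk_exit V adj _ U z w (Gconn z w) nUz Uw) as [l [f [Wl [Uf Hlf]]]].
    assert (Hl1 : As j l /\ ~ Bs j l).
    { apply (walk_side V adj (As j) (Bs j) (fun v => ~ U v) z l); auto.
      intros v nUv [? ?]. apply nUv. apply (Hsub j); auto; lia. }
    assert (Hl2 : Bs i l /\ ~ As i l).
    { apply (walk_side V adj (Bs i) (As i) (fun v => ~ U v) z l); auto. apply sep_sym; auto.
      intros v nUv [? ?]. apply nUv. apply (Hsub i); auto; lia. }
    destruct (Hj0 l (HL l (ex_intro _ f (conj (HF f Uf) (adj_sym _ _ Hlf))))) as [n [Hn Hnl]].
    apply (proj2 Hl2). apply (proj1 (mono n i ltac:(lia))). apply Hnl; eauto. exists j; tauto.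
Qed.

Lemma choice_fun {A B} (R : A -> B -> Prop) : (forall x, exists y, R x y) -> exists f, forall x, R x (f x).
Proof. intros H. exists (fun x => proj1_sig (constructive_indefinite_description _ (H x))).
  intros x. exact (proj2_sig (constructive_indefinite_description _ (H x))). Qed.

Fixpoint walkn {V} (adj : V -> V -> Prop) (n : nat) (u v : V) : Prop :=
  match n with 0 => u = v | S n => exists w, adj u w /\ walkn adj n w v end.

Lemma walkn_of_walk V adj (Q : V -> Prop) u v : walk_in V adj Q u v -> exists n, walkn adj n u v.
Proof. intros W; induction W as [|u w v _ Ha _ [n Hn]]. exists 0; reflexivity. exists (S n); simpl; eauto. Qed.

Lemma walkn_snoc {V} (adj : V -> V -> Prop) n u w v : walkn adj n u w -> adj w v -> walkn adj (S n) u v.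
Proof. revert u; induction n; simpl; intros u H Ha. subst; exists v; auto. destruct H as [x [? ?]]. exists x; split; auto. apply (IHn x); auto. Qed.

Lemma walkn_last {V} (adj : V -> V -> Prop) n u v : walkn adj (S n) u v -> exists w, walkn adj n u w /\ adj w v.
Proof. revert u; induction n; simpl; intros u [x [Hx H]]. subst; exists u; split; auto.
  destruct (IHn x H) as [y [? ?]]. exists y; split; eauto. Qed.

Lemma bfs V adj (Gconn : connected_graph V adj) (root : V) :
  exists (d : V -> nat) (p : V -> V), d root = 0 /\ (forall x, d x = 0 -> x = root) /\
    (forall x, 0 < d x -> adj (p x) x /\ d (p x) + 1 = d x).
Proof.
  assert (Hd : forall x, exists n, walkn adj n root x /\ forall m, walkn adj m root x -> n <= m).
  { intros x. apply least. eapply walkn_of_walk; apply Gconn. }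
  destruct (choice_fun _ Hd) as [d Hdf].
  assert (Hp : forall x, exists q, 0 < d x -> adj q x /\ d q + 1 = d x).
  { intros x. destruct (d x) eqn:E. exists x; lia.
    destruct (Hdf x) as [W Wm]. rewrite E in W. destruct (walkn_last _ _ _ _ W) as [q [Wq Hq]].
    exists q; intros _; split; auto.
    destruct (Hdf q) as [Wq' Wqm]. specialize (Wqm _ Wq).
    specialize (Wm _ (walkn_snoc _ _ _ _ _ (proj1 (Hdf q)) Hq)). lia. }
  destruct (choice_fun _ Hp) as [p Hpf].
  exists d, p; split; [|split]; auto.
  - destruct (Hdf root) as [_ Hm]. specialize (Hm 0 eq_refl). lia.
  - intros x Hx. destruct (Hdf x) as [W _]. rewrite Hx in W. simpl in W. auto.
Qed.

Lemma nodup_map_inj {A B} (f : A -> B) l : NoDup l -> (forall a b, In a l -> In b l -> f a = f b -> a = b) -> NoDup (map f l).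
Proof.
  induction l as [|a l IH]; intros Hn Hi; simpl. constructor.
  inversion Hn; subst. constructor.
  - intros Hin. apply in_map_iff in Hin as [b [Hb Hbl]]. assert (b = a) by (apply Hi; simpl; auto). subst; auto.
  - apply IH; auto. intros; apply Hi; simpl; auto.
Qed.

Lemma adj_chain_seq {V} (adj : V -> V -> Prop) (f : nat -> V) len : forall a,
  (forall k, a <= k -> k + 1 < a + S len -> adj (f k) (f (k + 1))) -> adj_chain V adj (map f (seq a (S len))).
Proof.
  induction len; intros a H; simpl. auto.
  simpl in IHlen. split.
  - replace (S a) with (a + 1) by lia. apply H; lia.
  - apply (IHlen (S a)). intros k Hk Hk2. apply H; lia.
Qed.

Lemma last_map_seq {A} (f : nat -> A) a L x : last (map f (seq a (S L))) x = f (a + L).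
Proof. rewrite seq_S, map_app. simpl. apply last_last. Qed.

Lemma comb_exists V adj (Glf : locally_finite V adj) (root : V) (d : V -> nat) (p : V -> V)
  (H0 : d root = 0) (H1 : forall x, d x = 0 -> x = root)
  (H2 : forall x, 0 < d x -> adj (p x) x /\ d (p x) + 1 = d x)
  (U : V -> Prop) : ~ finite_set V U -> exists s, is_ray V adj s /\ comb_with_teeth_in V adj s U.
Proof.
  intros HU.
  set (anc := fun k y => Nat.iter (d y - k) p y).
  assert (A1 : forall m y, m <= d y -> d (Nat.iter m p y) = d y - m).
  { induction m; intros y Hm. simpl; lia. rewrite Nat.iter_succ.
    destruct (H2 (Nat.iter m p y)) as [_ E]. rewrite IHm; lia. rewrite IHm in E; lia. }
  assert (A2 : forall k y, k <= d y -> d (anc k y) = k).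
  { intros k y Hk. unfold anc. rewrite A1; lia. }
  assert (A3 : forall k m y, k <= m -> m <= d y -> anc k (anc m y) = anc k y).
  { intros k m y Hkm Hm. unfold anc at 1. rewrite A2 by lia. unfold anc.
    rewrite <- Nat.iter_add. f_equal. lia. }
  assert (A4 : forall y, anc (d y) y = y).
  { intros y. unfold anc. rewrite Nat.sub_diag. reflexivity. }
  assert (A5 : forall k y, k + 1 <= d y -> p (anc (k + 1) y) = anc k y).
  { intros k y Hk. unfold anc. rewrite <- Nat.iter_succ. f_equal. lia. }
  assert (A6 : forall k y, k + 1 <= d y -> adj (anc k y) (anc (k + 1) y)).
  { intros k y Hk. rewrite <- A5 by auto. apply H2. rewrite A2; lia. }
  assert (A7 : forall y, anc 0 y = root).
  { intros y. apply H1. apply A2. lia. }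
  clearbody anc.
  set (Sub := fun x y => d x <= d y /\ anc (d x) y = x).
  set (Inf := fun x => ~ finite_set V (fun y => U y /\ Sub x y)).
  assert (Kon : forall x, Inf x -> exists c, d c = d x + 1 /\ p c = x /\ Inf c).
  { intros x Hx. apply NNPP; intro Hc. apply Hx.
    destruct (Glf x) as [lx Hlx].
    destruct (finite_union V lx (fun c y => d c = d x + 1 /\ p c = x /\ U y /\ Sub c y)) as [L HL].
    { intros c _. destruct (classic (d c = d x + 1 /\ p c = x)) as [[Ha Hb]|Hn].
      - apply NNPP; intro Hf. apply Hc. exists c; repeat split; auto.
        intro Hf2. apply Hf. destruct Hf2 as [l Hl]. exists l. intros v [? [? ?]]. apply Hl. tauto.
      - exists []. intros v [? [? _]]. tauto. }
    exists (x :: L). intros y [Uy [Sy Ay]].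
    destruct (Nat.eq_dec (d y) (d x)) as [E|E].
    - left. rewrite <- E, A4 in Ay. auto.
    - right. apply HL. exists (anc (d x + 1) y).
      assert (Dc : d (anc (d x + 1) y) = d x + 1) by (apply A2; lia).
      assert (Pc : p (anc (d x + 1) y) = x) by (rewrite A5 by lia; auto).
      split.
      + apply Hlx. rewrite <- Pc at 1. apply H2. lia.
      + repeat split; auto. lia. rewrite Dc. auto. }
  destruct (choice_fun (fun x c => Inf x -> d c = d x + 1 /\ p c = x /\ Inf c)) as [g Hg].
  { intros x. destruct (classic (Inf x)) as [Hx|Hx].
    - destruct (Kon x Hx) as [c Hc]; exists c; auto.
    - exists x; tauto. }
  set (s := fun n => Nat.iter n g root).
  assert (S1 : forall n, Inf (s n) /\ d (s n) = n).
  { induction n.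
    - simpl. split; auto. intros [l Hl]. apply HU. exists l. intros v Uv. apply Hl. split; auto.
      split; [rewrite H0; lia|]. rewrite H0. apply A7.
    - destruct IHn as [Ih Dn]. destruct (Hg (s n) Ih) as [D [_ I]]. unfold s; rewrite Nat.iter_succ.
      fold (s n). split; auto. lia. }
  assert (S2 : forall n, p (s (S n)) = s n).
  { intros n. destruct (Hg (s n) (proj1 (S1 n))) as [_ [P _]]. unfold s; rewrite Nat.iter_succ. auto. }
  assert (S0 : forall n, anc n (s n) = s n).
  { intros n. pose proof (A4 (s n)) as E. rewrite (proj2 (S1 n)) in E. exact E. }
  assert (S3 : forall n m, n <= m -> anc n (s m) = s n).
  { intros n m Hnm. induction m.
    - assert (n = 0) by lia; subst. apply S0.
    - destruct (Nat.eq_dec n (S m)) as [->|Hne]. apply S0.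
      rewrite <- (A3 n m (s (S m))) by (try rewrite (proj2 (S1 (S m))); lia).
      replace (anc m (s (S m))) with (s m). apply IHm; lia.
      rewrite <- A5 by (try rewrite (proj2 (S1 (S m))); lia).
      replace (m + 1) with (S m) by lia. rewrite S0. symmetry; apply S2. }
  assert (Ray : is_ray V adj s).
  { split.
    - intros n m E. rewrite <- (proj2 (S1 n)), <- (proj2 (S1 m)), E. auto.
    - intros n. rewrite <- (S2 n) at 1. apply H2. rewrite (proj2 (S1 (S n))). lia. }
  exists s; split; auto.
  set (good := fun n u => U u /\ n <= d u /\ anc n u = s n /\ (d u = n \/ (n + 1 <= d u /\ anc (n + 1) u <> s (n + 1)))).
  assert (G1 : forall N, exists n, N <= n /\ exists u, good n u).
  { intros N. apply NNPP; intro Hc.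
    destruct (S1 N) as [IN DN].
    assert (Hu : exists u, U u /\ Sub (s N) u).
    { apply NNPP; intro Hn. apply IN. exists []. intros v Hv. apply Hn; eauto. }
    destruct Hu as [u [Uu [Su1 Su2]]]. rewrite DN in Su1, Su2.
    assert (forall k, N + k <= d u /\ anc (N + k) u = s (N + k)).
    { induction k. rewrite Nat.add_0_r; auto.
      destruct IHk as [Ik1 Ik2].
      destruct (Nat.eq_dec (d u) (N + k)) as [E|E].
      - exfalso; apply Hc. exists (N + k); split; [lia|]. exists u. repeat split; auto.
      - destruct (classic (anc (N + k + 1) u = s (N + k + 1))) as [E2|E2].
        + replace (N + S k) with (N + k + 1) by lia. split; auto. lia.
        + exfalso; apply Hc. exists (N + k); split; [lia|]. exists u. repeat split; auto.
          right; split; auto; lia. }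
    destruct (H (d u + 1)). lia. }
  destruct (choice_fun (fun N n => N <= n /\ exists u, good n u) G1) as [nx Hnx].
  set (idx := fun i => Nat.iter i (fun n => nx (S n)) (nx 0)).
  assert (I1 : forall i, idx i < idx (S i)).
  { intros i. unfold idx at 2. rewrite Nat.iter_succ. fold (idx i). destruct (Hnx (S (idx i))). lia. }
  assert (I2 : forall i j, i < j -> idx i < idx j).
  { intros i j Hij. induction j. lia. destruct (Nat.eq_dec i j) as [->|]; auto.
    specialize (I1 j). specialize (IHj ltac:(lia)). lia. }
  assert (I3 : forall i, exists u, good (idx i) u).
  { intros i. destruct i; [apply (Hnx 0)|]. unfold idx; rewrite Nat.iter_succ. apply Hnx. }
  destruct (choice_fun (fun i u => good (idx i) u) I3) as [tu Htu].
  set (P := fun i => map (fun k => anc k (tu i)) (seq (idx i) (S (d (tu i) - idx i)))).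
  assert (E1 : forall i z, In z (P i) -> idx i <= d z /\ anc (idx i) z = s (idx i) /\
             (d z = idx i \/ (idx i + 1 <= d z /\ anc (idx i + 1) z <> s (idx i + 1)))).
  { intros i z Hz. unfold P in Hz. apply in_map_iff in Hz as [k [<- Hk]]. apply in_seq in Hk.
    destruct (Htu i) as [Uu [Hd [Ha Hor]]].
    rewrite A2 by lia. split; [lia|split].
    - rewrite A3 by lia. auto.
    - destruct (Nat.eq_dec k (idx i)) as [->|Hne]; [left; auto|right].
      split; [lia|]. rewrite A3 by lia. destruct Hor as [E|[_ E]]; auto. lia. }
  exists P. split; [|split; [|split]].
  - intros i. destruct (Htu i) as [Uu [Hd [Ha Hor]]]. split; [|split].
    + unfold P; simpl; discriminate.
    + unfold P. apply nodup_map_inj. apply seq_NoDup.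
      intros a b Ha' Hb' E. apply in_seq in Ha', Hb'. rewrite <- (A2 a (tu i)), <- (A2 b (tu i)) by lia.
      rewrite E; auto.
    + unfold P. apply adj_chain_seq. intros k Hk Hk2. apply A6. lia.
  - intros i j z Hij Hi Hj.
    assert (Hne : idx i <> idx j).
    { destruct (Nat.lt_total i j) as [Hl|[Hl|Hl]]; [|lia|]; specialize (I2 _ _ Hl); lia. }
    assert (forall a b, idx a < idx b -> In z (P a) -> In z (P b) -> False).
    { intros a b Hab Ha Hb. destruct (E1 a z Ha) as [_ [_ [Ea|[Ea1 Ea2]]]]; destruct (E1 b z Hb) as [Eb1 [Eb2 _]].
      - lia.
      - apply Ea2. rewrite <- (A3 _ (idx b)) by lia. rewrite Eb2. apply S3. lia. }
    destruct (Nat.lt_total (idx i) (idx j)) as [Hl|[Hl|Hl]]; eauto.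
  - intros i. destruct (Htu i) as [Uu [Hd [Ha Hor]]].
    exists (idx i), (map (fun k => anc k (tu i)) (seq (S (idx i)) (d (tu i) - idx i))).
    split. unfold P. simpl. rewrite Ha. auto.
    intros y Hy m E. assert (Hy' : In y (P i)) by (unfold P; simpl; right; auto).
    apply in_map_iff in Hy as [k [Hk1 Hk2]]. apply in_seq in Hk2.
    destruct (E1 i y Hy') as [_ [_ [Ey|[Ey1 Ey2]]]].
    + rewrite <- Hk1, A2 in Ey; lia.
    + apply Ey2. rewrite E. apply S3. rewrite E in Ey1. rewrite (proj2 (S1 m)) in Ey1. lia.
  - intros i. unfold P. rewrite last_map_seq. destruct (Htu i) as [Uu [Hd _]].
    replace (idx i + (d (tu i) - idx i)) with (d (tu i)) by lia. rewrite A4. auto.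
Qed.

Lemma path_cross V adj (adj_sym : forall u v, adj u v -> adj v u) (C D : V -> Prop) x0 :
  is_sep V adj C D -> forall l a, adj_chain V adj (a :: l) -> D a -> ~ C a -> C (last (a :: l) x0) ->
  exists x, In x (a :: l) /\ C x /\ D x.
Proof.
  intros [Hc He] l. induction l as [|b l IH]; intros a Ha Da Ca Cl.
  - simpl in Cl. tauto.
  - destruct Ha as [Hab Hch].
    destruct (classic (C b)) as [Cb|Cb].
    + destruct (classic (D b)) as [Db|Db].
      * exists b; simpl; auto.
      * exfalso. apply (He b a Cb Db Da Ca). auto.
    + assert (D b) by (destruct (Hc b); tauto).
      destruct (IH b Hch H Cb) as [x [Hx ?]]. change (C (last (b :: l) x0)). exact Cl.
      exists x; split; [right|]; auto.
Qed.

Lemma closure_not_sub V adj (adj_sym : forall u v, adj u v -> adj v u) (U C D : V -> Prop) (r : nat -> V) :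
  is_ray V adj r -> end_in_closure V adj r U -> is_sep V adj C D -> finite_order V C D ->
  (exists n0, forall n, n0 <= n -> D (r n) /\ ~ C (r n)) -> ~ (forall v, U v -> C v).
Proof.
  intros Rr [t [Rt [HEq [P [HP [Hdis [Hhead Hlast]]]]]]] Hs [l Hl] [e He] HUC.
  destruct (HEq (fun v => C v /\ D v) (ex_intro _ l Hl)) as [n0 [m0 [Ht [Hr W]]]].
  set (M := max m0 e).
  assert (W2 : walk_in V adj (fun v => ~ (C v /\ D v)) (r m0) (r M)).
  { apply ray_walk; [auto| |unfold M; lia]. intros n Hn; apply Hr; auto. }
  assert (Ht0 : D (t n0) /\ ~ C (t n0)).
  { apply (walk_side V adj D C (fun v => ~ (C v /\ D v)) (r M) (t n0)).
    - apply sep_sym; auto.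
    - intros v Hv [? ?]; tauto.
    - apply walk_rev; auto. eapply walk_trans; eauto.
    - apply He; unfold M; lia.
    - apply He; unfold M; lia. }
  assert (Htail : forall n, n0 <= n -> D (t n) /\ ~ C (t n)).
  { intros n Hn. apply (walk_side V adj D C (fun v => ~ (C v /\ D v)) (t n0) (t n)).
    apply sep_sym; auto. intros v Hv [? ?]; tauto. apply ray_walk; auto. tauto. tauto. }
  destruct (choice_fun _ Hhead) as [k Hk].
  assert (Hinj : forall i j, t (k i) = t (k j) -> i = j).
  { intros i j E. apply NNPP; intro Hne. destruct (Hk i) as [rest [Ei _]]. destruct (Hk j) as [rest' [Ej _]].
    apply (Hdis i j (t (k i)) Hne). rewrite Ei; left; auto. rewrite E, Ej; left; auto. }
  destruct (inj_avoid (fun i => t (k i)) Hinj (map t (seq 0 n0))) as [N1 HN1].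
  destruct (inf_pigeon (fun i x => In x (P i)) l) as [x [_ Hx]].
  { intros N. exists (max N N1); split; [lia|].
    set (i := max N N1).
    assert (Hki : n0 <= k i).
    { destruct (le_lt_dec n0 (k i)); auto. exfalso. apply (HN1 i); [unfold i; lia|].
      apply in_map. apply in_seq. lia. }
    destruct (Hk i) as [rest [Ei _]]. destruct (HP i) as [_ [_ Hch]]. rewrite Ei in Hch.
    destruct (path_cross V adj adj_sym C D (t 0) Hs rest (t (k i)) Hch) as [x [Hxi [Cx Dx]]].
    - apply Htail; auto.
    - apply Htail; auto.
    - rewrite <- Ei. apply HUC. apply Hlast.
    - exists x. split. apply Hl; auto. rewrite Ei; auto. }
  destruct (Hx 0) as [i1 [_ H1]]. destruct (Hx (S i1)) as [i2 [Hi2 H2]].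
  apply (Hdis i1 i2 x); auto. lia.
Qed.

Lemma nonequiv_sep V adj (adj_sym : forall u v, adj u v -> adj v u) (r1 r2 : nat -> V) :
  is_ray V adj r1 -> is_ray V adj r2 -> ~ ray_equiv V adj r1 r2 -> exists C D, distinguishes_ends V adj r1 r2 C D.
Proof.
  intros R1 R2 Hne.
  apply not_all_ex_not in Hne as [X HX]. apply imply_to_and in HX as [[l Hl] HX].
  destruct (inj_avoid r1 (proj1 R1) l) as [N1 HN1].
  destruct (inj_avoid r2 (proj1 R2) l) as [N2 HN2].
  set (K := fun v => ~ X v /\ walk_in V adj (fun v => ~ X v) v (r1 N1)).
  assert (Hnw : ~ walk_in V adj (fun v => ~ X v) (r1 N1) (r2 N2)).
  { intros W. apply HX. exists N1, N2. repeat split; auto.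
    - intros n Hn Xn. apply (HN1 n Hn). auto.
    - intros m Hm Xm. apply (HN2 m Hm). auto. }
  assert (Hsep : is_sep V adj (fun v => ~ K v) (fun v => K v \/ X v)).
  { split. intros v. destruct (classic (K v)); auto.
    intros u v nKu nDu Dv nnKv Huv. apply nKu. split. tauto.
    assert (Kv : K v) by tauto. apply (walk_step _ _ _ u v); [tauto|exact Huv|apply Kv]. }
  assert (Hfin : forall A B, (forall v, A v /\ B v -> X v) -> finite_order V A B).
  { intros A B H. exists l. intros v Hv. apply Hl, H, Hv. }
  exists (fun v => ~ K v), (fun v => K v \/ X v). split.
  - split; [auto|split]. apply Hfin. intros v [? [?|?]]; tauto.
    exists N1. intros n Hn.
    assert (K (r1 n)).
    { split. intro Xn; apply (HN1 n Hn); auto.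
      apply walk_rev; auto. apply ray_walk; auto. intros m Hm Xm; apply (HN1 m Hm); auto. }
    tauto.
  - split; [apply sep_sym; auto|split]. apply Hfin. intros v [[?|?] ?]; tauto.
    exists N2. intros n Hn.
    assert (nX : ~ X (r2 n)) by (intro Xn; apply (HN2 n Hn); auto).
    assert (~ K (r2 n)).
    { intros [_ W]. apply Hnw. apply walk_rev; auto. eapply walk_trans; [|exact W].
      apply ray_walk; auto. intros m Hm Xm; apply (HN2 m Hm); auto. }
    tauto.
Qed.

Lemma nested_sides V (C D A B E F E' F' : V -> Prop) : same_sep V C D E F -> same_sep V A B E' F' ->
  (sep_le V E F E' F' \/ sep_le V E F F' E' \/ sep_le V F E E' F' \/ sep_le V F E F' E') ->
  exists W Y, (seteq V A W \/ seteq V B W) /\ (seteq V C Y \/ seteq V D Y) /\ forall v, W v -> Y v.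
Proof.
  intros H1 H2 H3.
  assert (SE : (seteq V C E \/ seteq V D E) /\ (seteq V C F \/ seteq V D F)) by (destruct H1 as [[]|[]]; tauto).
  assert (SE' : (seteq V A E' \/ seteq V B E') /\ (seteq V A F' \/ seteq V B F')) by (destruct H2 as [[]|[]]; tauto).
  destruct H3 as [[_ H]|[[_ H]|[[_ H]|[_ H]]]].
  - exists F', F; tauto.
  - exists E', F; tauto.
  - exists F', E; tauto.
  - exists E', E; tauto.
Qed.

Theorem mainTheorem18
  (V : Type) (adj : V -> V -> Prop)
  (adj_sym : forall u v, adj u v -> adj v u)
  (adj_irrefl : forall v, ~ adj v v)
  (Gconn : connected_graph V adj)
  (Glf : locally_finite V adj)
  (N : (V -> Prop) -> (V -> Prop) -> Prop)
  (N_seps : forall A B, N A B -> is_sep V adj A B)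
  (N_nested : nested V N)
  (As Bs : nat -> V -> Prop)
  (seq_in_N : forall i, in_sepset V N (As i) (Bs i))
  (seq_incr : forall i j, i < j -> sep_lt V (As i) (Bs i) (As j) (Bs j))
  (seq_tight : forall i, tight_sep V adj (As i) (Bs i))
  (nonexh : exists v, forall i, Bs i v)
  (N_dist : forall r1 r2,
      is_ray V adj r1 -> is_ray V adj r2 ->
      end_in_closure V adj r1 (fun v => (exists i, As i v) /\ (forall i, Bs i v)) ->
      end_in_closure V adj r2 (fun v => (exists i, As i v) /\ (forall i, Bs i v)) ->
      (exists C D, distinguishes_ends V adj r1 r2 C D) ->
      exists C D, in_sepset V N C D /\ distinguishes_ends V adj r1 r2 C D) :
  exists r, is_ray V adj r /\
    end_in_closure V adj r (fun v => (exists i, As i v) /\ (forall i, Bs i v)) /\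
    forall r', is_ray V adj r' ->
      end_in_closure V adj r' (fun v => (exists i, As i v) /\ (forall i, Bs i v)) ->
      ray_equiv V adj r' r.
Proof.
  set (U := fun v => (exists i, As i v) /\ (forall i, Bs i v)).
  assert (mono : forall i j, i <= j -> (forall v, As i v -> As j v) /\ (forall v, Bs j v -> Bs i v)).
  { intros i j Hij. destruct (Nat.eq_dec i j) as [->|Hne]. split; auto.
    destruct (seq_incr i j ltac:(lia)) as [[? ?] _]. auto. }
  assert (strict : forall i j, i < j -> ~ (seteq V (As i) (As j) /\ seteq V (Bs i) (Bs j))).
  { intros i j Hij. apply (seq_incr i j Hij). }
  assert (seps : forall i, is_sep V adj (As i) (Bs i)) by (intros i; apply (seq_tight i)).
  pose proof (U_infinite V adj adj_sym Gconn Glf As Bs mono strict seps seq_tight nonexh) as UInf.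
  destruct nonexh as [root _].
  destruct (bfs V adj Gconn root) as [d [p [H0 [H1 H2]]]].
  destruct (comb_exists V adj Glf root d p H0 H1 H2 U UInf) as [s [Rs Cs]].
  assert (Cls : end_in_closure V adj s U).
  { exists s; split; [auto|split; auto].
    intros X [l Hl]. destruct (inj_avoid s (proj1 Rs) l) as [M HM].
    exists M, M. repeat split.
    - intros n Hn Xn. apply (HM n Hn); auto.
    - intros n Hn Xn. apply (HM n Hn); auto.
    - apply walk_refl. intros Xn. apply (HM M (le_n _)); auto. }
  exists s; split; [auto|split; [exact Cls|]].
  intros r' Rr' Cr'. apply NNPP; intro Hne.
  destruct (N_dist r' s Rr' Rs Cr' Cls (nonequiv_sep V adj adj_sym r' s Rr' Rs Hne))
    as [C [D [HN [[sC [fC HrC]] [sD [fD HsD]]]]]].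
  pose proof (closure_not_sub V adj adj_sym U C D r' Rr' Cr' sC fC HrC) as nC.
  pose proof (closure_not_sub V adj adj_sym U D C s Rs Cls sD fD HsD) as nD.
  assert (Hi : forall i, (forall v, As i v -> C v) \/ (forall v, As i v -> D v)).
  { intros i. destruct HN as [E [F [NEF SEF]]]. destruct (seq_in_N i) as [E' [F' [NEF' SEF']]].
    destruct (nested_sides V C D (As i) (Bs i) E F E' F' SEF SEF' (N_nested _ _ _ _ NEF NEF'))
      as [W [Y [HW [HY HWY]]]].
    destruct HW as [HW|HW].
    - destruct HY as [HY|HY]; [left|right]; intros v Av; apply HY, HWY, HW, Av.
    - exfalso. destruct HY as [HY|HY]; [apply nC|apply nD]; intros v Uv; apply HY, HWY, HW, (proj2 Uv). }
  destruct (classic (forall M, exists i, M <= i /\ forall v, As i v -> C v)) as [HC|HC].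
  - apply nC. intros v [[j Aj] _]. destruct (HC j) as [i [Hij Hi']]. apply Hi', (proj1 (mono j i Hij)); auto.
  - apply not_all_ex_not in HC as [M HM].
    apply nD. intros v [[j Aj] _].
    destruct (Hi (max M j)) as [HC|HD].
    + exfalso. apply HM. exists (max M j); split; [lia|auto].
    + apply HD, (proj1 (mono j (max M j) ltac:(lia))); auto.
Qed.
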